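(* Let $k\ge 1$ be an integer and let $G$ be a finite simple graph with $\gamma^d_k(G)<\infty$. Let $S$ be a global defensive $k$-alliance in $G$ with $|S|=\gamma^d_k(G)$, and suppose that the induced subgraph $G\langle S\rangle$ has a $1$-perfect code. Let $H$ be a finite simple graph with at least two vertices. Then $G[H]$ has a global defensive $k$-alliance. Moreover, if $k\ge 2$, then $$\gamma^d_k(G[H])\leq n(H)\big(\gamma^d_k(G)-\gamma(G\langle S\rangle)\big)+\gamma(G\langle S\rangle),$$ where $\gamma(G\langle S\rangle)$ is the domination number of $G\langle S\rangle$.
   Context: All graphs are finite and simple; $n(H)=|V_H|$. For $S\subseteq V_G$ and $v\in V_G$, $N_S(v)=\{u\in S: uv\in E_G\}$ and $\bar S=V_G\setminus S$. For an integer $k$, a nonempty $S\subseteq V_G$ is a global defensive $k$-alliance in $G$ if every vertex outside $S$ has a neighbor in $S$ and $|N_S(v)|\ge |N_{\bar S}(v)|+k$ for every $v\in S$; $\gamma^d_k(G)$ is the minimum size of such a set ($\infty$ if none exists). $G\langle S\rangle$ is the subgraph of $G$ induced by $S$. A $1$-perfect code in a graph $F$ is a set $D\subseteq V_F$ such that the closed neighborhoods $N[x]=\{x\}\cup N(x)$, $x\in D$, partition $V_F$. The domination number $\gamma(F)$ is the minimum size of a dominating set of $F$. The lexicographic product $G[H]$ has vertex set $V_G\times V_H$, with $(g_1,h_1)\sim(g_2,h_2)$ iff $g_1g_2\in E_G$, or $g_1=g_2$ and $h_1h_2\in E_H$. *)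

(* Defs.v *)
(* A simple graph = symmetric irreflexive relation e : rel T on a finType T. *)
From HB Require Import structures.
From mathcomp Require Import all_boot all_order all_algebra.
Set Implicit Arguments. Unset Strict Implicit. Unset Printing Implicit Defensive.
Import Order.TTheory GRing.Theory Num.Theory.

Section Graphs.
Variable T : finType.
Variable e : rel T.

Definition nbhd_in (S : {set T}) (v : T) : {set T} := [set u in S | e v u].

Definition is_gda (k : int) (S : {set T}) : bool :=
  [&& S != set0,
      [forall v, (v \notin S) ==> [exists u in S, e v u]] &
      [forall v in S,
         (#|nbhd_in S v|%:Z >= #|nbhd_in (~: S) v|%:Z + k)%R]].

(* gamma^d_k(G) : None stands for infinity *)
Definition gammad (k : int) : option nat :=
  if [exists S, is_gda k S]
  then Some (\big[minn/#|T|.+1]_(S : {set T} | is_gda k S) #|S|)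
  else None.

Definition dominating (D : {set T}) : bool :=
  [forall v, (v \notin D) ==> [exists u in D, e v u]].

Definition domination_number : nat :=
  \big[minn/#|T|.+1]_(D : {set T} | dominating D) #|D|.

Definition cnbhd (x : T) : {set T} := x |: [set y | e x y].

(* 1-perfect code: the closed neighbourhoods N[x], x in D, partition V
   (every vertex lies in N[x] for exactly one x in D) *)
Definition perfect_code (D : {set T}) : bool :=
  [forall v, #|[set x in D | v \in cnbhd x]| == 1].

Definition has_perfect_code : bool := [exists D, perfect_code D].

End Graphs.

Definition induced (T : finType) (e : rel T) (S : {set T}) : rel {x : T | x \in S} :=
  fun x y => e (val x) (val y).
Arguments induced [T] e S _ _.

Definition lexprod (T1 T2 : finType) (eG : rel T1) (eH : rel T2) : rel (T1 * T2) :=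
  fun x y => eG x.1 y.1 || ((x.1 == y.1) && eH x.2 y.2).

(* Main.v *)
Require Import Defs.
From HB Require Import structures.
From mathcomp Require Import all_boot all_order all_algebra.
From mathcomp Require Import zify.
Import Order.TTheory GRing.Theory Num.Theory.
Set Implicit Arguments. Unset Strict Implicit. Unset Printing Implicit Defensive.

Lemma card_set_sum (T : finType) (P : pred T) :
  #|[set p | P p]| = \sum_p (P p : nat).
Proof.
rewrite -sum1_card big_mkcond /=; apply: eq_bigr => p _; rewrite inE; by case: (P p).
Qed.

Lemma card_pair_sum (T1 T2 : finType) (P : pred (T1 * T2)) :
  #|[set p | P p]| = \sum_x #|[set y | P (x, y)]|.
Proof.
rewrite card_set_sum.
under [RHS]eq_bigr => x _ do rewrite card_set_sum.
rewrite pair_big /=; apply: eq_bigr => [[x y]] _ //.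
Qed.

Lemma bigminn_le (T : finType) (P : pred T) (F : T -> nat) x0 j :
  P j -> \big[minn/x0]_(i | P i) F i <= F j.
Proof.
move=> Pj.
have : j \in index_enum T by rewrite mem_index_enum.
elim: (index_enum T) => [|a r IH] //=; rewrite inE big_cons => /orP [/eqP <-|hj].
  by rewrite Pj geq_minl.
case: (P a) => //; have := IH hj; lia.
Qed.

Lemma card_nb_sum (T : finType) (e : rel T) (Y : {set T}) g :
  #|[set u in Y | e g u]| = \sum_(x | e g x) (x \in Y : nat).
Proof.
rewrite card_set_sum [RHS]big_mkcond /=; apply: eq_bigr => x _.
by case: (x \in Y); case: (e g x).
Qed.

Section Lex.
Variables (T1 T2 : finType) (eG : rel T1) (eH : rel T2).
Hypotheses (irrG : irreflexive eG).

Definition fib (X : {set T1 * T2}) x := [set y | (x, y) \in X].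

Lemma nb_card X g h :
  #|nbhd_in (lexprod eG eH) X (g, h)| =
  \sum_(x | eG g x) #|fib X x| + #|[set y | ((g, y) \in X) && eH h y]|.
Proof.
rewrite /nbhd_in card_pair_sum (bigID (fun x => eG g x)) /=.
congr (_ + _).
  apply: eq_bigr => x hx; apply: eq_card => y.
  by rewrite !inE /lexprod /= hx andbT.
rewrite (bigD1 g) ?irrG //= big1 ?addn0.
  apply: eq_card => y; by rewrite !inE /lexprod /= irrG eqxx.
move=> x /andP [hx hxg]; apply/eqP; rewrite cards_eq0; apply/eqP/setP => y.
by rewrite !inE /lexprod /= (negbTE hx) eq_sym (negbTE hxg) andbF.
Qed.

End Lex.

Section Main.
Variables (T1 T2 : finType) (eG : rel T1) (eH : rel T2).
Hypotheses (irrG : irreflexive eG).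
Variables (k : int) (S D : {set T1}) (h0 : T2).
Hypotheses (hk : (1 <= k)%R) (hS : is_gda eG k S) (hDS : D \subset S)
 (hd : forall g, g \in S -> #|[set u in D | eG g u]| + (g \in D) <= 1)
 (hk2 : forall g, g \in S :\: D -> #|[set u in D | eG g u]| = 1 -> (2 <= k)%R).

Definition Sp := [set p : T1 * T2 | (p.1 \in S :\: D) || ((p.1 \in D) && (p.2 == h0))].

Lemma fibSp x : #|fib Sp x| = #|T2| * (x \in S :\: D) + (x \in D).
Proof.
have hDS' := subsetP hDS.
rewrite /fib /Sp.
case: (boolP (x \in D)) => xD.
  have xS := hDS' _ xD.
  rewrite inE xD /= muln0 add0n -(cards1 h0); apply: eq_card => y.
  by rewrite !inE /= xD.
case: (boolP (x \in S)) => xS.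
  rewrite inE xD xS muln1 addn0 -cardsT; apply: eq_card => y.
  by rewrite !inE /= xD xS.
rewrite inE (negbTE xS) andbF muln0 /=; apply/eqP; rewrite cards_eq0; apply/eqP/setP => y.
by rewrite !inE /= (negbTE xS) (negbTE xD) andbF.
Qed.

Lemma fibC (X : {set T1 * T2}) x : fib (~: X) x = ~: fib X x.
Proof. by apply/setP => y; rewrite !inE. Qed.

Lemma fibSpC x : #|fib (~: Sp) x| = #|T2| - #|fib Sp x|.
Proof. by rewrite fibC -(cardsC (fib Sp x)) addKn. Qed.


Lemma Sp_gda : 0 < #|T2| -> is_gda (lexprod eG eH) k Sp.
Proof.
move=> n2.
move: hS => /and3P [hne hdom hall].
have hDS' := subsetP hDS.
have inSp u : u \in S -> (u, h0) \in Sp.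
  move=> uS; rewrite inE /=; case: (boolP (u \in D)) => uD.
    by rewrite eqxx orbT.
  by rewrite inE uD uS.
have nbS g : g \in S -> exists2 u, u \in S & eG g u.
  move=> gS; move/forallP: hall => /(_ g); rewrite gS /= => hg.
  have : 0 < #|nbhd_in eG S g| by lia.
  rewrite card_gt0 => /set0Pn [u]; rewrite inE => /andP[uS eu]; by exists u.
have nbAll g : exists2 u, u \in S & eG g u.
  case: (boolP (g \in S)) => gS; first exact: nbS.
  move/forallP: hdom => /(_ g); rewrite (negbTE gS) /= => /existsP [u /andP [uS eu]].
  by exists u.
apply/and3P; split.
- case/set0Pn: hne => g gS; apply/set0Pn; exists (g, h0); exact: inSp.
- apply/forallP => [[g h]]; apply/implyP => _; case: (nbAll g) => u uS eu.
  by apply/existsP; exists (u, h0); rewrite inSp //= /lexprod /= eu.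
apply/forallP => [[g h]]; apply/implyP => hin.
rewrite !nb_card //.
set n := #|T2|.
have e1 : \sum_(x | eG g x) #|fib Sp x| = n * \sum_(x | eG g x) (x \in S :\: D : nat) + \sum_(x | eG g x) (x \in D : nat).
  under eq_bigr => x _ do rewrite fibSp.
  by rewrite big_split /= big_distrr.
have e2 : \sum_(x | eG g x) #|fib (~:Sp) x| = n * \sum_(x|eG g x) (x \notin S : nat) + (n - 1) * \sum_(x|eG g x) (x \in D : nat).
  rewrite !big_distrr -big_split /=; apply: eq_bigr => x _; rewrite fibSpC fibSp inE.
  move: (hDS' x); case: (x \in D); case: (x \in S) => //= h1; first [by have := h1 isT | rewrite -/n; lia].
have ea : #|nbhd_in eG S g| = \sum_(x|eG g x)(x \in S :\: D : nat) + \sum_(x|eG g x)(x \in D : nat).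
  rewrite /nbhd_in card_nb_sum -big_split /=; apply: eq_bigr => x _; rewrite inE.
  move: (hDS' x); case: (x \in D); case: (x \in S) => //= h1; first [by have := h1 isT | lia].
have eb : #|nbhd_in eG (~:S) g| = \sum_(x|eG g x)(x \notin S : nat).
  rewrite /nbhd_in card_nb_sum; apply: eq_bigr => x _; by rewrite inE.
have ed : #|[set u in D | eG g u]| = \sum_(x|eG g x)(x \in D : nat) by rewrite card_nb_sum.
have hcout : #|[set y | ((g, y) \in ~: Sp) && eH h y]| <= n - #|fib Sp g|.
  rewrite -fibSpC; apply: subset_leq_card; apply/subsetP => y; rewrite !inE => /andP[] //.
move/forallP: hall => /(_ g).
rewrite e1 e2 ea eb.
move: hcout; rewrite fibSp -/n.
set d := \sum_(x | eG g x) (x \in D : nat).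
rewrite inE /= in hin; case/orP: hin => [hgSD | /andP [gD /eqP hh]].
  have gS : g \in S by move: hgSD; rewrite inE => /andP[].
  have gD : g \notin D by move: hgSD; rewrite inE => /andP[].
  have := hd gS; have := hk2 hgSD; rewrite ed -/d hgSD (negbTE gD) gS /=.
  move=> hk2' hd' hco hal.
  have [A20|A21] : d = 0 \/ d = 1 by lia.
    rewrite A20 in hal *; nia.
  have k2 := hk2' A21; rewrite A21 in hal *; nia.
have gS := hDS' _ gD.
have := hd gS; rewrite ed -/d gD gS inE gD /=.
move=> hd' hco hal.
have A20 : d = 0 by lia.
rewrite A20 in hal *; nia.
Qed.

End Main.

Lemma gammad_le (T : finType) (e : rel T) (k : int) (X : {set T}) :
  is_gda e k X -> exists m, gammad e k = Some m /\ m <= #|X|.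
Proof.
move=> hX; rewrite /gammad.
have -> : [exists S, is_gda e k S] by apply/existsP; exists X.
eexists; split; first reflexivity.
exact: bigminn_le.
Qed.

Lemma sum_mem (T : finType) (A : {set T}) : \sum_x (x \in A : nat) = #|A|.
Proof. by rewrite -(card_set_sum (fun x => x \in A)); apply: eq_card => x; rewrite inE. Qed.

Lemma card_fib_sum (T1 T2 : finType) (X : {set T1 * T2}) :
  #|X| = \sum_x #|fib X x|.
Proof.
transitivity #|[set p | p \in X]|; first by apply: eq_card => p; rewrite inE.
exact: card_pair_sum.
Qed.

Theorem mainTheorem4 (k : int) (T1 T2 : finType) (eG : rel T1) (eH : rel T2)
  (symG : symmetric eG) (irrG : irreflexive eG)
  (symH : symmetric eH) (irrH : irreflexive eH)
  (hk : (1 <= k)%R)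
  (hfin : gammad eG k <> None)
  (S : {set T1}) (hS : is_gda eG k S) (hSmin : gammad eG k = Some #|S|)
  (hpc : has_perfect_code (induced eG S))
  (hH : 2 <= #|T2|) :
  gammad (lexprod eG eH) k <> None /\
  ((2 <= k)%R ->
   exists m, gammad (lexprod eG eH) k = Some m /\
     m <= #|T2| * (#|S| - domination_number (induced eG S))
          + domination_number (induced eG S)).
Proof.
have n2 : 0 < #|T2| by lia.
case/card_gt0P: (n2) => h0 _.
split.
  have hg : is_gda (lexprod eG eH) k (Sp S set0 h0).
    apply: Sp_gda => //; first exact: sub0set.
      move=> g _; have -> : [set u in set0 | eG g u] = set0 :> {set T1}.
        by apply/setP => u; rewrite !inE.
      by rewrite cards0 in_set0.
    move=> g _; have -> : [set u in set0 | eG g u] = set0 :> {set T1}.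
      by apply/setP => u; rewrite !inE.
    by rewrite cards0.
  by case: (gammad_le hg) => m [-> _].
move=> hk2.
case/existsP: hpc => D0 hD0.
set D : {set T1} := val @: D0.
have hDS : D \subset S by apply/subsetP => x /imsetP [y _ ->]; exact: valP y.
have hd : forall g, g \in S -> #|[set u in D | eG g u]| + (g \in D) <= 1.
  move=> g gS.
  pose gs : {x | x \in S} := exist _ g gS.
  move/forallP: hD0 => /(_ gs) /eqP hc.
  set X := [set x in D0 | eG (val x) g].
  have e1 : [set u in D | eG g u] = val @: X.
    apply/setP => u; rewrite inE; apply/andP/imsetP.
      move=> [/imsetP [y yD ->] eu]; exists y => //; by rewrite inE yD /= symG.
    move=> [y]; rewrite inE => /andP [yD ey] ->; split; first exact: imset_f.
    by rewrite symG.
  have e2 : (g \in D) = (gs \in D0).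
    by rewrite (_ : g = val gs) // mem_imset //; exact: val_inj.
  rewrite e1 card_imset; last exact: val_inj.
  rewrite e2 -hc.
  case: (boolP (gs \in D0)) => hgs.
    have -> : [set x in D0 | gs \in cnbhd (induced eG S) x] = gs |: X.
      apply/setP => x; rewrite !inE /induced /= (eq_sym gs x).
      by case: eqP => [->|] //=; rewrite hgs.
    by rewrite cardsU1 inE /= irrG andbF addnC.
  have -> : [set x in D0 | gs \in cnbhd (induced eG S) x] = X.
    apply/setP => x; rewrite !inE /induced /=.
    case: eqP => [<-|] //=; by rewrite (negbTE hgs).
  by rewrite addn0.
have hg : is_gda (lexprod eG eH) k (Sp S D h0).
  by apply: Sp_gda => //.
case: (gammad_le hg) => m [hm hmle]; exists m; split => //.
have hdom : dominating (induced eG S) D0.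
  apply/forallP => v; apply/implyP => hv.
  move/forallP: hD0 => /(_ v) /eqP hc.
  have : 0 < #|[set x in D0 | v \in cnbhd (induced eG S) x]| by rewrite hc.
  rewrite card_gt0 => /set0Pn [x]; rewrite !inE => /andP [xD /orP [/eqP vx|ex]].
    by rewrite vx xD in hv.
  apply/existsP; exists x; by rewrite xD /induced symG.
have hgam : domination_number (induced eG S) <= #|D0| by exact: bigminn_le.
have hDD0 : #|D| = #|D0| by rewrite card_imset //; exact: val_inj.
have hDSc : #|D| <= #|S| by exact: subset_leq_card.
have hsp : #|Sp S D h0| = #|T2| * (#|S| - #|D|) + #|D|.
  rewrite card_fib_sum.
  under eq_bigr => x _ do rewrite fibSp //.
  rewrite big_split /= -big_distrr /= !sum_mem cardsD (setIidPr hDS) //.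
set n := #|T2|.
move: hmle; rewrite hsp -/n.
set gm := domination_number _.
move=> hmle.
have : n * (#|S| - #|D|) + #|D| <= n * (#|S| - gm) + gm by nia.
lia.
Qed.
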